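(* Let $q$ be a prime power, $1\le h\le T$ integers, and $p(r)$, $r=0,\dots,h$, a probability distribution. The discrete memoryless channel with input alphabet $\mathcal{P}(\mathbb{F}_q^T,h)$, output alphabet $\bigcup_{r=0}^h \mathcal{P}(\mathbb{F}_q^T,r)$, and transition probabilities $$W(V\mid U) = \begin{cases} \dfrac{p(h-\dim V)}{\binom{h}{\dim V}_q}, & V\subseteq U,\\ 0, & \text{otherwise,}\end{cases}$$ (which, by Theorem 3, is the channel from $\langle\mathbf{X}\rangle$ to $\langle \mathbf{G}\mathbf{X}\rangle$ when $\mathbf{X}$ is a uniformly random ordered basis of the input subspace and $\mathbf{G}$ is an independent random $h\times h$ matrix over $\mathbb{F}_q$ with rank deficiency distribution $p$) has capacity $$C = \max_{P_{\mathbf{U}}} I(\mathbf{U};\mathbf{V}) = \sum_{r=0}^h p(r)\,\log \frac{\binom{T}{h-r}_q}{\binom{h}{h-r}_q},$$ where the maximum is over all probability distributions on $\mathcal{P}(\mathbb{F}_q^T,h)$.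
   Context: $\mathbb{F}_q$ is the finite field with $q$ elements; for a matrix $M$, $\langle M\rangle$ is its row space. $\mathcal{P}(\mathbb{F}_q^T,k)$ is the set of $k$-dimensional subspaces of $\mathbb{F}_q^T$. $\binom{n}{\ell}_q = \prod_{i=0}^{\ell-1}\frac{q^{n-i}-1}{q^{\ell-i}-1}$ is the $q$-ary Gaussian coefficient (number of $\ell$-dimensional subspaces of an $n$-dimensional space over $\mathbb{F}_q$). The rank deficiency of an $h\times h$ matrix $G$ is $h-\operatorname{rank}G$, and $p(r)$ is the probability that the random transfer matrix has rank deficiency $r$. $I(\cdot;\cdot)$ denotes mutual information, with logarithms in a fixed base. *)

(* Defs.v *)
From HB Require Import structures.
From mathcomp Require Import all_boot all_order all_algebra all_field.
From Stdlib Require Import Reals.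

Set Implicit Arguments.
Unset Strict Implicit.
Unset Printing Implicit Defensive.

Notation "\rsum_ ( i : I | P ) E" := (\big[Rplus/R0]_(i : I | P) E)%R
  (at level 41, i, I at level 50, E at level 41) : R_scope.

(* A subspace of F^T is represented by its canonical generating matrix:
   a T x T matrix A with <<A>> = A (genmx is a canonical representative of
   the row space, cf. eq_genmx / genmx_id). *)
Definition is_subsp (F : finFieldType) (T : nat) (A : 'M[F]_T) : bool :=
  (<<A>>%MS == A).

Definition gauss (q : nat) (n l : nat) : R :=
  \big[Rmult/R1]_(i < l)
     ((INR q ^ (subn n i) - 1) / (INR q ^ (subn l i) - 1))%R.

Definition logb (b x : R) : R := (ln x / ln b)%R.

Definition Wch (F : finFieldType) (T h : nat) (p : nat -> R)
    (V U : 'M[F]_T) : R :=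
  if (V <= U)%MS then (p (subn h (\rank V)) / gauss #|F| h (\rank V))%R else R0.

Definition in_alph (F : finFieldType) (T h : nat) (U : 'M[F]_T) : bool :=
  is_subsp U && (\rank U == h).
Definition out_alph (F : finFieldType) (T h : nat) (V : 'M[F]_T) : bool :=
  is_subsp V && (\rank V <= h)%N.

Definition is_input_dist (F : finFieldType) (T h : nat) (P : 'M[F]_T -> R)
  : Prop :=
  (forall U, 0 <= P U)%R /\
  (forall U, ~~ in_alph h U -> P U = 0%R) /\
  (\rsum_(U : 'M[F]_T | in_alph h U) P U)%R = 1%R.

Definition out_dist (F : finFieldType) (T h : nat) (p : nat -> R)
    (P : 'M[F]_T -> R) (V : 'M[F]_T) : R :=
  (\rsum_(U : 'M[F]_T | in_alph h U) (P U * Wch h p V U))%R.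

(* Mutual information I(U;V) in base b, with the convention 0 log 0 = 0. *)
Definition mutinf (F : finFieldType) (T h : nat) (p : nat -> R) (b : R)
    (P : 'M[F]_T -> R) : R :=
  (\rsum_(U : 'M[F]_T | in_alph h U)
     \rsum_(V : 'M[F]_T | out_alph h V)
       (if Rlt_dec 0 (P U * Wch h p V U)
        then P U * Wch h p V U * logb b (Wch h p V U / out_dist h p P V)
        else 0))%R.

(* Main.v *)
Require Import Defs.
From HB Require Import structures.
From mathcomp Require Import all_boot all_order all_algebra all_field.
From Stdlib Require Import Reals.
From Stdlib Require Import Lra Lia.
From mathcomp Require Import all_boot all_order all_algebra all_field.
Set Implicit Arguments. Unset Strict Implicit. Unset Printing Implicit Defensive.
Module Comb.
Section C.
Import GRing.Theory.
Local Open Scope ring_scope.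
Variable F : finFieldType.
Variable T : nat.
Local Notation q := #|F|.

Lemma card_rowspace k (X : 'M[F]_(k, T)) :
  #|[set v : 'rV[F]_T | (v <= X)%MS]| = expn q (\rank X).
Proof.
have -> : [set v : 'rV[F]_T | (v <= X)%MS] = [set x *m row_base X | x in 'rV[F]_(\rank X)].
  apply/setP=> v; rewrite inE; apply/idP/imsetP.
    move=> vX; have /submxP[x ->] : (v <= row_base X)%MS by rewrite eq_row_base.
    by exists x.
  by case=> x _ ->; apply: submx_trans (submxMl x _) _; rewrite eq_row_base.
rewrite card_imset ?card_mx ?mul1n //.
have [B AB1] := row_freeP (row_base_free X); apply: can_inj (mulmx^~ B) _ => v.
by rewrite -mulmxA AB1 mulmx1.
Qed.

Lemma rank_addv (v : 'rV[F]_T) (X : 'M[F]_T) :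
  \rank (v + X)%MS = (\rank X + ~~ (v <= X)%MS)%N.
Proof.
case: (boolP (v <= X)%MS) => vX /=.
  by rewrite addn0; apply/eqmx_rank; apply/eqmxP/addsmx_idPr.
apply/eqP; rewrite eqn_leq; apply/andP; split.
  rewrite addn1; apply: leq_trans (mxrank_adds_leqif v X) _.
  by rewrite -[X in (_ <= X)%N]addn1 addnC leq_add2l rank_leq_row.
rewrite addn1 (ltn_leqif (mxrank_leqif_sup (addsmxSr v X))).
by rewrite addsmx_sub negb_and vX.
Qed.

Lemma aux a k (b : bool) : (a <= k)%N -> (a + b == k.+1)%N = (a == k) && b.
Proof.
case: b => le; first by rewrite addn1 eqSS andbT.
by rewrite addn0 andbF; apply/negbTE; rewrite neq_ltn ltnS le.
Qed.

Lemma count_ext (V U : 'M[F]_T) r n m : (V <= U)%MS -> \rank V = r -> \rank U = n ->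
  #|[set B : 'M[F]_(m,T) | (B <= U)%MS && (\rank (V + B)%MS == r + m)%N]|
   = (\prod_(i < m) (expn q n - expn q (r + i)))%N.
Proof.
move=> VU rV rU; elim: m => [|m IHm].
  rewrite big_ord0 (@eq_card1 _ (0 : 'M[F]_(0, T))%R) // => B.
  rewrite !inE [B]flatmx0 sub0mx /=.
  by rewrite addsmx0 rV addn0 !eqxx.
pose S m := [set B : 'M[F]_(m,T) | (B <= U)%MS && (\rank (V + B)%MS == r + m)%N].
have key : forall (v : 'rV[F]_T) (B : 'M[F]_(m, T)),
   (col_mx v B \in S (1 + m)%N) = [&& B \in S m, (v <= U)%MS & ~~ (v <= V + B)%MS].
  move=> v B; rewrite /S !inE col_mx_sub.
  have [hv hB] : (v <= col_mx v B)%MS /\ (B <= col_mx v B)%MS.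
    by have := submx_refl (col_mx v B); rewrite col_mx_sub => /andP.
  have -> : \rank (V + col_mx v B)%MS = \rank (v + (V + B))%MS.
    apply/eqmx_rank/andP; split.
      rewrite !addsmx_sub col_mx_sub addsmxSl (submx_trans (addsmxSl V B)) ?addsmxSr //.
      by rewrite (submx_trans (addsmxSr V B)) ?addsmxSr.
    rewrite !addsmx_sub addsmxSl (submx_trans hv) ?addsmxSr //.
    by rewrite (submx_trans hB) ?addsmxSr.
  rewrite rank_addv.
  have hle : (\rank (V + B)%MS <= r + m)%N.
    by apply: leq_trans (mxrank_adds_leqif V B) _; rewrite rV leq_add2l rank_leq_row.
  rewrite add1n addnS aux //.
  by case: (v <= U)%MS; case: (B <= U)%MS; rewrite /= ?andbF ?andbT.
rewrite big_ord_recr /= -IHm -sum_nat_const -sum1_card.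
rewrite -/(S m.+1) -/(S m).
rewrite (partition_big (@dsubmx _ 1 m T) (mem (S m))) /=; last first.
  move=> A; have := key (@usubmx _ 1 m T A) (@dsubmx _ 1 m T A).
  by rewrite vsubmxK => -> /andP[].
apply: eq_bigr => B BS.
rewrite (reindex (fun v => @col_mx _ 1 m T v B)) /=; last first.
  exists (@usubmx _ 1 m T) => [v _ | A]; first by rewrite col_mxKu.
  by rewrite inE => /andP[_ /eqP <-]; rewrite vsubmxK.
rewrite (eq_bigl (mem ([set v : 'rV[F]_T | (v <= U)%MS] :\: [set v : 'rV[F]_T | (v <= V + B)%MS]))); last first.
  move=> v; rewrite col_mxKd eqxx andbT key BS /= !inE andbC.
  by [].
rewrite sum1_card cardsD.
have -> : [set v : 'rV[F]_T | (v <= U)%MS] :&: [set v | (v <= V + B)%MS] = [set v | (v <= V + B)%MS].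
  apply/setIidPr/subsetP => v; rewrite !inE => h; apply: submx_trans h _.
  rewrite addsmx_sub VU; by move: BS; rewrite inE => /andP[].
rewrite !card_rowspace rU; move: BS; rewrite inE => /andP[_ /eqP ->] //.
Qed.

Lemma gen_eq k (X : 'M[F]_(k, T)) (W : 'M[F]_T) : is_subsp W ->
  (<<X>>%MS == W) = (X <= W)%MS && (\rank X == \rank W).
Proof.
rewrite /is_subsp => /eqP sW; apply/eqP/andP => [<- | [XW /eqP rXW]].
  by rewrite genmxE mxrank_gen.
rewrite -sW; apply/eq_genmx/eqmxP.
by rewrite -(mxrank_leqif_eq XW) rXW.
Qed.

Lemma count_sub (U : 'M[F]_T) n r : \rank U = n -> (r <= n)%N ->
  (#|[set W : 'M[F]_T | [&& is_subsp W, \rank W == r & (W <= U)%MS]]|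
   * \prod_(i < r) (q ^ r - q ^ (0 + i)))%N = (\prod_(i < r) (q ^ n - q ^ (0 + i)))%N.
Proof.
move=> rU le_rn.
rewrite -(count_ext r (sub0mx T U) (mxrank0 _ _ _) rU); symmetry; rewrite -sum1_card.
rewrite (partition_big (fun B : 'M[F]_(r, T) => <<B>>%MS)
   (mem [set W : 'M[F]_T | [&& is_subsp W, \rank W == r & (W <= U)%MS]])) /=; last first.
  move=> B; rewrite !inE /is_subsp genmx_id eqxx mxrank_gen genmxE /=.
  by rewrite adds0mx add0n => /andP[-> ->].
rewrite -sum_nat_const; apply: eq_bigr => W; rewrite inE => /and3P[sW /eqP rW WU].
rewrite -(count_ext r (sub0mx T W) (mxrank0 _ _ _) rW) -sum1_card.
apply: eq_bigl => B; rewrite !inE gen_eq // rW adds0mx add0n.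
apply/andP/andP => [[/andP[_ ->] /andP[-> _]] // | [BW ->]]; split; rewrite ?andbT ?eqxx //.
exact: submx_trans BW WU.
Qed.

Lemma count_sup (V : 'M[F]_T) r h : \rank V = r -> (r <= h)%N -> (h <= T)%N ->
  (#|[set U : 'M[F]_T | [&& is_subsp U, \rank U == h & (V <= U)%MS]]|
   * \prod_(i < h - r) (q ^ h - q ^ (r + i)))%N = (\prod_(i < h - r) (q ^ T - q ^ (r + i)))%N.
Proof.
move=> rV le_rh le_hT.
rewrite -(count_ext (h - r) (submx1 V) rV (mxrank1 _ _)); symmetry; rewrite -sum1_card.
rewrite (partition_big (fun B : 'M[F]_(h - r, T) => <<(V + B)%MS>>%MS)
   (mem [set U : 'M[F]_T | [&& is_subsp U, \rank U == h & (V <= U)%MS]])) /=; last first.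
  move=> B; rewrite !inE /is_subsp genmx_id eqxx mxrank_gen genmxE /= addsmxSl andbT.
  by rewrite subnKC // => /andP[_ ->].
rewrite -sum_nat_const; apply: eq_bigr => U; rewrite inE => /and3P[sU /eqP rU VU].
rewrite -(count_ext (h - r) VU rV rU) -sum1_card.
apply: eq_bigl => B; rewrite !inE gen_eq // rU subnKC // submx1 addsmx_sub VU.
by case: (B <= U)%MS; case: (\rank _ == h).
Qed.

Definition Sub (U : 'M[F]_T) r := [set W : 'M[F]_T | [&& is_subsp W, \rank W == r & (W <= U)%MS]].
Definition Sup (V : 'M[F]_T) h := [set U : 'M[F]_T | [&& is_subsp U, \rank U == h & (V <= U)%MS]].
Definition fullmx : 'M[F]_T := 1%:M.
Lemma rank_fullmx : \rank fullmx = T. Proof. exact: mxrank1. Qed.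
Lemma sub_fullmx k (V : 'M[F]_(k, T)) : (V <= fullmx)%MS. Proof. exact: submx1. Qed.

Lemma card_F_gt1 : (1 < #|F|)%N.
Proof.
have : (#|[set (0 : F)%R; (1 : F)%R]| <= #|F|)%N by apply: max_card.
by rewrite cards2 eq_sym oner_neq0.
Qed.

Lemma prod_pos n s m : (s + m <= n)%N ->
  (0 < \prod_(i < m) (q ^ n - q ^ (s + i)))%N.
Proof.
move=> le; apply: prodn_gt0 => i; rewrite subn_gt0 ltn_exp2l; last exact: card_F_gt1.
by apply: leq_trans le; rewrite ltn_add2l.
Qed.

Definition Mr h r := ((\prod_(i < h - r) (q ^ T - q ^ (r + i))) %/ (\prod_(i < h - r) (q ^ h - q ^ (r + i))))%N.

Lemma card_Sup (V : 'M[F]_T) r h : \rank V = r -> (r <= h)%N -> (h <= T)%N ->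
  #|Sup V h| = Mr h r.
Proof.
move=> rV le1 le2; rewrite /Mr -(count_sup rV le1 le2) mulnK //.
by apply: prod_pos; rewrite subnKC.
Qed.

Lemma dbl h r :
  (\sum_(U in Sub fullmx h) #|Sub U r|)%N = (\sum_(V in Sub fullmx r) #|Sup V h|)%N.
Proof.
transitivity (\sum_(U in Sub fullmx h) \sum_(V | (V \in Sub fullmx r) && (V <= U)%MS) 1)%N.
  apply: eq_bigr => U _; rewrite -sum1_card; apply: eq_bigl => V.
  by rewrite !inE sub_fullmx andbT andbA.
rewrite (exchange_big_dep (mem (Sub fullmx r))) /=; last by move=> U V _ /andP[].
apply: eq_bigr => V HV; rewrite -sum1_card; apply: eq_bigl => U.
by rewrite HV /Sub /Sup !inE sub_fullmx !andbT andbA; case: (is_subsp U); case: (_ == h).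
Qed.
End C.
End Comb.


From Stdlib Require Import Reals.
Import Comb.
Set Implicit Arguments. Unset Strict Implicit. Unset Printing Implicit Defensive.

HB.instance Definition _ := Monoid.isComLaw.Build R R0 Rplus
  (fun x y z => esym (Rplus_assoc x y z)) Rplus_comm Rplus_0_l.
HB.instance Definition _ := Monoid.isComLaw.Build R R1 Rmult
  (fun x y z => esym (Rmult_assoc x y z)) Rmult_comm Rmult_1_l.
HB.instance Definition _ := Monoid.isMulLaw.Build R R0 Rmult Rmult_0_l Rmult_0_r.
HB.instance Definition _ := Monoid.isAddLaw.Build R Rmult Rplus
  Rmult_plus_distr_r Rmult_plus_distr_l.

Open Scope R_scope.

Lemma rsum_ge0 (I : Type) (r : seq I) (P : pred I) (G : I -> R) :
  (forall i, P i -> 0 <= G i) -> 0 <= \big[Rplus/R0]_(i <- r | P i) G i.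
Proof. move=> H; apply: big_ind => //; [lra | move=> x y; lra]. Qed.

Lemma rsum_le (I : Type) (r : seq I) (P : pred I) (G1 G2 : I -> R) :
  (forall i, P i -> G1 i <= G2 i) ->
  \big[Rplus/R0]_(i <- r | P i) G1 i <= \big[Rplus/R0]_(i <- r | P i) G2 i.
Proof. move=> H; apply: big_ind2 => //; [lra | move=> *; lra]. Qed.

Lemma rsum_const (I : finType) (A : {pred I}) (c : R) :
  \big[Rplus/R0]_(i in A) c = INR #|A| * c.
Proof.
rewrite big_const; elim: #|A| => [|k IH]; first by rewrite /=; lra.
rewrite S_INR /= IH; lra.
Qed.

Lemma INR_sum (I : Type) (r : seq I) (P : pred I) (G : I -> nat) :
  INR (\sum_(i <- r | P i) G i)%nat = \big[Rplus/R0]_(i <- r | P i) INR (G i).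
Proof. by apply: (big_morph INR plus_INR). Qed.

Lemma INR_prod (I : Type) (r : seq I) (P : pred I) (G : I -> nat) :
  INR (\prod_(i <- r | P i) G i)%nat = \big[Rmult/R1]_(i <- r | P i) INR (G i).
Proof. by apply: (big_morph INR mult_INR). Qed.

Lemma ln_le_m1 x : 0 < x -> ln x <= x - 1.
Proof. move=> hx; have := exp_ineq1_le (ln x); rewrite exp_ln //; lra. Qed.

Lemma INR_expn (q k : nat) : INR (expn q k) = INR q ^ k.
Proof. elim: k => [|k IH]; first by rewrite expn0. by rewrite expnS mult_INR IH. Qed.

Section G.
Variable q : nat.
Hypothesis q2 : (1 < q)%nat.

Lemma qR_ge2 : 2 <= INR q.
Proof. have : (2 <= q)%nat by []. move/leP/le_INR; by rewrite /=; lra. Qed.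

Lemma pow_gt1 k : (0 < k)%nat -> 1 < INR q ^ k.
Proof.
case: k => // k _; have := qR_ge2 => h2.
rewrite /=. have : 1 <= INR q ^ k by apply: pow_R1_Rle; lra.
nra.
Qed.

Lemma gauss_pos n r : (r <= n)%nat -> 0 < gauss q n r.
Proof.
move=> le_rn; rewrite /gauss; apply: (big_ind (fun x => 0 < x)); first lra.
  by move=> x y; apply: Rmult_lt_0_compat.
move=> i _; have hi := ltn_ord i.
apply: Rdiv_lt_0_compat.
  suff : 1 < INR q ^ (n - i)%nat by lra.
  apply: pow_gt1; rewrite subn_gt0; exact: leq_trans hi le_rn.
suff : 1 < INR q ^ (r - i)%nat by lra.
by apply: pow_gt1; rewrite subn_gt0.
Qed.

Lemma gauss_eq n r : (r <= n)%nat ->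
  gauss q n r * INR (\prod_(i < r) (expn q r - expn q (0 + i)))%nat
  = INR (\prod_(i < r) (expn q n - expn q (0 + i)))%nat.
Proof.
move=> le_rn; rewrite !INR_prod /gauss -big_split /=.
apply: eq_bigr => i _; have hi := ltn_ord i; rewrite add0n.
have hin : (i <= n)%nat by apply: leq_trans (ltnW hi) le_rn.
rewrite !minus_INR; try by apply/leP; rewrite leq_exp2l // ltnW.
have er : INR q ^ r = INR q ^ i * INR q ^ (r - i)%nat by rewrite -pow_add; congr (_ ^ _); exact: esym (subnKC (ltnW hi)).
have en : INR q ^ n = INR q ^ i * INR q ^ (n - i)%nat by rewrite -pow_add; congr (_ ^ _); exact: esym (subnKC hin).
rewrite !INR_expn er en.
have h : 1 < INR q ^ (r - i)%nat by apply: pow_gt1; rewrite subn_gt0.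
field; lra.
Qed.
End G.


Lemma term_bound (pu w Pv Qv L b : R) : 1 < b -> 0 <= pu -> 0 <= w -> pu * w <= Pv ->
  (0 < pu * w -> 0 < Qv /\ w / Qv = L) ->
  (if Rlt_dec 0 (pu * w) then pu * w * logb b (w / Pv) else 0)
   <= pu * w * logb b L + (pu * w * Qv / Pv - pu * w) / ln b.
Proof.
move=> hb hpu hw hPv H.
have lb : 0 < ln b by rewrite -ln_1; apply: ln_increasing; lra.
case: Rlt_dec => [ha|ha] /=.
  have hPv0 : 0 < Pv by lra.
  have hw0 : 0 < w by nra.
  have [hQ hL] := H ha.
  have hL0 : 0 < L by rewrite -hL; apply: Rdiv_lt_0_compat.
  have e : w / Pv = L * (Qv / Pv) by rewrite -hL; field; lra.
  rewrite e /logb ln_mult //; last by apply: Rdiv_lt_0_compat.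
  have hy := ln_le_m1 (Rdiv_lt_0_compat _ _ hQ hPv0).
  set y := ln (Qv / Pv) in hy *.
  set a := pu * w.
  have E1 : a * ((ln L + y) / ln b) = a * (ln L / ln b) + (a * y) / ln b by field; lra.
  have E2 : (a * Qv / Pv - a) / ln b = (a * (Qv / Pv - 1)) / ln b by field; lra.
  rewrite E1 E2; apply: Rplus_le_compat_l; apply: Rmult_le_compat_r.
    by left; apply: Rinv_0_lt_compat.
  by apply: Rmult_le_compat_l; rewrite /a; lra.
have ha0 : pu * w = 0 by have := Rmult_le_pos _ _ hpu hw; lra.
rewrite ha0; apply: Req_le; rewrite /Rdiv; ring.
Qed.

Section RealPart.
Variables (F : finFieldType) (T h : nat) (p : nat -> R).
Hypothesis hT : (h <= T)%nat.
Hypothesis hp : forall r, (r <= h)%nat -> 0 <= p r.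
Local Notation G := (gauss #|F|).
Let q2 := card_F_gt1 F.

Lemma cnt_sub_R (U : 'M[F]_T) n r : \rank U = n -> (r <= n)%nat ->
  INR #|Sub U r| = G n r.
Proof.
move=> rU le; have E := count_sub rU le.
have P0 : (0 < \prod_(i < r) (expn #|F| r - expn #|F| (0 + i)))%nat by apply: prod_pos; rewrite add0n.
have := gauss_eq q2 le; rewrite -E mult_INR => E2.
apply: (Rmult_eq_reg_r (INR (\prod_(i < r) (expn #|F| r - expn #|F| (0 + i))))).
  by rewrite E2.
by apply/not_0_INR/eqP; rewrite -lt0n.
Qed.

Lemma rev_sum (n : nat) (g : nat -> R) :
  \big[Rplus/R0]_(r < n.+1) g (n - r)%nat = \big[Rplus/R0]_(r < n.+1) g r.
Proof.
rewrite (reindex_inj rev_ord_inj) /=; apply: eq_bigr => i _.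
by rewrite subSS subKn // -ltnS.
Qed.

Lemma sum_rank (U : 'M[F]_T) n (f : nat -> R) : \rank U = n -> (h <= n)%nat ->
  \big[Rplus/R0]_(V : 'M[F]_T | out_alph h V) (if (V <= U)%MS then f (\rank V) else R0)
  = \big[Rplus/R0]_(r < h.+1) (f r * G n r).
Proof.
move=> rU hn; rewrite -big_mkcondr /=.
rewrite (partition_big (fun V : 'M[F]_T => (inord (\rank V) : 'I_h.+1)) xpredT) //=.
apply: eq_bigr => r _.
have hr : (r <= h)%nat by rewrite -ltnS.
rewrite (eq_bigl (fun V => V \in Sub U r)); last first.
  move=> V; rewrite /Sub !inE /out_alph.
  case: (boolP (\rank V <= h)%nat) => hV.
    rewrite -val_eqE /= inordK // andbT.
    by case: is_subsp; case: (V <= U)%MS; case: (_ == _).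
  rewrite andbF /=; apply/esym/negbTE; apply: contra hV => /and3P[_ /eqP -> _] //.
rewrite (eq_bigr (fun _ => f r)); last by move=> V; rewrite inE => /and3P[_ /eqP -> _].
rewrite rsum_const (cnt_sub_R rU (leq_trans hr hn)); apply: Rmult_comm.
Qed.

Lemma Gpos n r : (r <= n)%nat -> 0 < G n r.
Proof. move=> le; exact: (@gauss_pos #|F| q2 n r le). Qed.

Lemma W_sum (U : 'M[F]_T) (g : nat -> R) : in_alph h U ->
  \big[Rplus/R0]_(V : 'M[F]_T | out_alph h V) (Wch h p V U * g (\rank V))
  = \big[Rplus/R0]_(r < h.+1) (p (h - r)%nat * g r).
Proof.
case/andP => _ /eqP rU.
transitivity (\big[Rplus/R0]_(V : 'M[F]_T | out_alph h V)
   (if (V <= U)%MS then p (h - \rank V)%nat / G h (\rank V) * g (\rank V) else R0)).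
  by apply: eq_bigr => V _; rewrite /Wch; case: (V <= U)%MS => //; rewrite Rmult_0_l.
rewrite (sum_rank (fun r => p (h - r)%nat / G h r * g r) rU (leqnn h)).
apply: eq_bigr => r _; have := Gpos (n := h) (r := r) (ltnSE (ltn_ord r)) => hG.
field; lra.
Qed.

Definition Qd (V : 'M[F]_T) : R := p (h - \rank V)%nat / G T (\rank V).

Lemma Q_sum : \big[Rplus/R0]_(r < h.+1) p r = 1 ->
  \big[Rplus/R0]_(V : 'M[F]_T | out_alph h V) Qd V = 1.
Proof.
move=> hs.
transitivity (\big[Rplus/R0]_(V : 'M[F]_T | out_alph h V)
   (if (V <= fullmx F T)%MS then p (h - \rank V)%nat / G T (\rank V) else R0)).
  by apply: eq_bigr => V _; rewrite sub_fullmx.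
rewrite (sum_rank (fun r => p (h - r)%nat / G T r) (rank_fullmx F T) hT).
rewrite -[RHS]hs -(rev_sum h p); apply: eq_bigr => r _.
have hr : (r <= T)%nat by apply: leq_trans hT; rewrite -ltnS.
have := Gpos hr => hG; field; lra.
Qed.

Lemma W_ge0 (V U : 'M[F]_T) : out_alph h V -> 0 <= Wch h p V U.
Proof.
case/andP => _ hV; rewrite /Wch; case: (V <= U)%MS; last lra.
apply: Rmult_le_pos; first by apply: hp; rewrite leq_subr.
by left; apply: Rinv_0_lt_compat; exact: Gpos.
Qed.

Lemma W_ratio (V U : 'M[F]_T) : out_alph h V -> 0 < Wch h p V U ->
  0 < Qd V /\ Wch h p V U / Qd V = G T (\rank V) / G h (\rank V).
Proof.
case/andP => _ hV; rewrite /Wch /Qd; case: (V <= U)%MS; last lra.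
have hG1 := Gpos hV; have hG2 := Gpos (leq_trans hV hT) => hW.
have hpp : 0 < p (h - \rank V)%nat.
  have := hp (leq_subr (\rank V) h) => h0.
  case: (Rle_lt_or_eq_dec _ _ h0) => // e; rewrite -e in hW.
  by move: hW; rewrite /Rdiv Rmult_0_l; lra.
split; first by apply: Rdiv_lt_0_compat.
field; lra.
Qed.

Lemma first_sum (P : 'M[F]_T -> R) (g : nat -> R) :
  \big[Rplus/R0]_(U : 'M[F]_T | in_alph h U) P U = 1 ->
  \big[Rplus/R0]_(U : 'M[F]_T | in_alph h U) \big[Rplus/R0]_(V : 'M[F]_T | out_alph h V)
     (P U * Wch h p V U * g (\rank V))
  = \big[Rplus/R0]_(r < h.+1) (p (h - r)%nat * g r).
Proof.
move=> hs.
transitivity (\big[Rplus/R0]_(U : 'M[F]_T | in_alph h U)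
   (P U * \big[Rplus/R0]_(r < h.+1) (p (h - r)%nat * g r))).
  apply: eq_bigr => U hU; rewrite -(W_sum g hU) big_distrr /=.
  by apply: eq_bigr => V _; rewrite Rmult_assoc.
by rewrite -big_distrl /= hs Rmult_1_l.
Qed.

Lemma PV_sum (P : 'M[F]_T -> R) :
  \big[Rplus/R0]_(U : 'M[F]_T | in_alph h U) P U = 1 ->
  \big[Rplus/R0]_(r < h.+1) p r = 1 ->
  \big[Rplus/R0]_(V : 'M[F]_T | out_alph h V) out_dist h p P V = 1.
Proof.
move=> hs hps; rewrite /out_dist exchange_big /=.
transitivity (\big[Rplus/R0]_(U : 'M[F]_T | in_alph h U)
   \big[Rplus/R0]_(V : 'M[F]_T | out_alph h V) (P U * Wch h p V U * (fun _ => 1) (\rank V))).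
  by apply: eq_bigr => U _; apply: eq_bigr => V _; rewrite Rmult_1_r.
rewrite (first_sum (fun _ => 1) hs) -[RHS]hps -(rev_sum h p); apply: eq_bigr => r _; exact: Rmult_1_r.
Qed.

Lemma PV_ge0 (P : 'M[F]_T -> R) V : (forall U, 0 <= P U) -> out_alph h V ->
  0 <= out_dist h p P V.
Proof.
move=> hP hV; apply: rsum_ge0 => U _; apply: Rmult_le_pos => //; exact: W_ge0.
Qed.

Lemma PV_ge_term (P : 'M[F]_T -> R) U V : (forall U, 0 <= P U) -> out_alph h V ->
  in_alph h U -> P U * Wch h p V U <= out_dist h p P V.
Proof.
move=> hP hV hU; rewrite /out_dist (bigD1 U) //=.
have : 0 <= \big[Rplus/R0]_(i : 'M[F]_T | in_alph h i && (i != U)) (P i * Wch h p V i).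
  by apply: rsum_ge0 => i _; apply: Rmult_le_pos => //; exact: W_ge0.
move=> H; apply: (Rle_trans _ (P U * Wch h p V U + 0)); [right; ring | apply: Rplus_le_compat_l; exact: H].
Qed.

Lemma Qd_ge0 V : out_alph h V -> 0 <= Qd V.
Proof.
case/andP => _ hV; apply: Rmult_le_pos; first by apply: hp; rewrite leq_subr.
by left; apply: Rinv_0_lt_compat; apply: Gpos; exact: leq_trans hV hT.
Qed.

Lemma upper (b : R) (P : 'M[F]_T -> R) : 1 < b -> is_input_dist h P ->
  \big[Rplus/R0]_(r < h.+1) p r = 1 ->
  mutinf h p b P <= \big[Rplus/R0]_(r < h.+1) (p (h - r)%nat * logb b (G T r / G h r)).
Proof.
move=> hb [P0 [Pout Ps]] hps.
have lb : 0 < ln b by rewrite -ln_1; apply: ln_increasing; lra.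
apply: Rle_trans (_ : _ <= \big[Rplus/R0]_(U : 'M[F]_T | in_alph h U)
   \big[Rplus/R0]_(V : 'M[F]_T | out_alph h V)
   (P U * Wch h p V U * (fun r => logb b (G T r / G h r)) (\rank V)
    + (P U * Wch h p V U * Qd V / out_dist h p P V - P U * Wch h p V U) / ln b)) _.
  apply: rsum_le => U hU; apply: rsum_le => V hV.
  apply: term_bound => //; first exact: W_ge0.
    exact: PV_ge_term.
  move=> ha; apply: W_ratio => //.
  have := W_ge0 U hV; have := P0 U => h1 h2; nra.
under eq_bigr => U _ do rewrite big_split.
rewrite big_split (first_sum (fun r => logb b (G T r / G h r)) Ps).
set C' := \big[Rplus/R0]_(r < h.+1) _.
suff H : \big[Rplus/R0]_(U : 'M[F]_T | in_alph h U) \big[Rplus/R0]_(V : 'M[F]_T | out_alph h V)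
   ((P U * Wch h p V U * Qd V / out_dist h p P V - P U * Wch h p V U) / ln b) <= 0.
  apply: (Rle_trans _ (C' + 0)); [apply: Rplus_le_compat_l; exact: H | right; ring].
rewrite exchange_big /=.
apply: Rle_trans (_ : _ <= \big[Rplus/R0]_(V : 'M[F]_T | out_alph h V)
   (Qd V * / ln b + - (out_dist h p P V * / ln b))) _.
  apply: rsum_le => V hV.
  rewrite (eq_bigr (fun U => P U * Wch h p V U * ((Qd V / out_dist h p P V - 1) / ln b))); last first.
    by move=> U _; rewrite /Rdiv; ring.
  rewrite -big_distrl /= -/(out_dist h p P V).
  have hPV := PV_ge0 P0 hV; have hQ := Qd_ge0 hV.
  case: (Rle_lt_or_eq_dec _ _ hPV) => hPV'.
    apply: Req_le; field; lra.
  rewrite -hPV' Rmult_0_l; have := Rinv_0_lt_compat _ lb => il.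
  have := Rmult_le_pos _ _ hQ (Rlt_le _ _ il); lra.
rewrite big_split /= -!big_distrl /=.
rewrite -(big_morph Ropp Ropp_plus_distr Ropp_0) -big_distrl /=.
rewrite Q_sum // PV_sum //; lra.
Qed.

Lemma dbl_R r : (r <= h)%nat -> G T h * G h r = G T r * INR (Mr F T h r).
Proof.
move=> hr; have := f_equal INR (dbl F T h r); rewrite !INR_sum.
rewrite [LHS](eq_bigr (fun _ => G h r)); last first.
  by move=> U; rewrite inE => /and3P[_ /eqP rU _]; apply: cnt_sub_R.
rewrite [RHS](eq_bigr (fun _ => INR (Mr F T h r))); last first.
  by move=> V; rewrite inE => /and3P[_ /eqP rV _]; rewrite (card_Sup rV hr hT).
rewrite !rsum_const (cnt_sub_R (rank_fullmx F T) hT).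
by rewrite (cnt_sub_R (rank_fullmx F T) (leq_trans hr hT)).
Qed.

Definition P0 (U : 'M[F]_T) : R := if in_alph h U then / G T h else 0.

Lemma P0_ge0 U : 0 <= P0 U.
Proof.
rewrite /P0; case: in_alph; last lra.
by left; apply: Rinv_0_lt_compat; apply: Gpos.
Qed.

Lemma P0_sum : \big[Rplus/R0]_(U : 'M[F]_T | in_alph h U) P0 U = 1.
Proof.
rewrite (eq_bigr (fun _ => / G T h)); last by move=> U hU; rewrite /P0 hU.
rewrite (eq_bigl (fun U => U \in Sub (fullmx F T) h)); last first.
  by move=> U; rewrite /Sub inE sub_fullmx andbT.
rewrite rsum_const (cnt_sub_R (rank_fullmx F T) hT).
by apply: Rinv_r; have := Gpos hT; lra.
Qed.

Lemma P0_dist : is_input_dist h P0.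
Proof.
split; first exact: P0_ge0.
split; last exact: P0_sum.
by move=> U /negbTE hU; rewrite /P0 hU.
Qed.

Lemma PV0 V : out_alph h V -> out_dist h p P0 V = Qd V.
Proof.
move=> hV; have hr : (\rank V <= h)%nat by case/andP: hV.
rewrite /out_dist.
rewrite (eq_bigr (fun U => if (V <= U)%MS then / G T h * (p (h - \rank V)%nat / G h (\rank V)) else 0));
  last by move=> U hU; rewrite /P0 hU /Wch; case: (V <= U)%MS => //; ring.
rewrite -big_mkcondr /=.
rewrite (eq_bigl (fun U => U \in Sup V h)); last first.
  by move=> U; rewrite /Sup inE andbA.
rewrite rsum_const (card_Sup (erefl _) hr hT).
have e := dbl_R hr.
have h1 := Gpos hT; have h2 := Gpos hr; have h3 := Gpos (leq_trans hr hT).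
have -> : INR (Mr F T h (\rank V)) = G T h * G h (\rank V) / G T (\rank V).
  by rewrite e; field; lra.
  unfold Qd; set x := gauss _ T h in h1 *; set y := gauss _ h (\rank V) in h2 *; set z := gauss _ T (\rank V) in h3 *; field; lra.
Qed.

Lemma mutinf_P0 b : 1 < b -> \big[Rplus/R0]_(r < h.+1) p r = 1 ->
  mutinf h p b P0 = \big[Rplus/R0]_(r < h.+1) (p (h - r)%nat * logb b (G T r / G h r)).
Proof.
move=> hb hps.
rewrite /mutinf -(first_sum (fun r => logb b (G T r / G h r)) P0_sum).
apply: eq_bigr => U hU; apply: eq_bigr => V hV.
case: Rlt_dec => [ha|ha] /=.
  rewrite PV0 //.
  have hW : 0 < Wch h p V U by have := W_ge0 U hV; have := P0_ge0 U => h1 h2; nra.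
  by have [_ ->] := W_ratio hV hW.
have ha0 : P0 U * Wch h p V U = 0.
  by have := Rmult_le_pos _ _ (P0_ge0 U) (W_ge0 U hV); lra.
by rewrite ha0 Rmult_0_l.
Qed.
End RealPart.

Close Scope R_scope.

Theorem theorem4 (F : finFieldType) (T h : nat) (p : nat -> R) (b : R) :
  (1 <= h)%N -> (h <= T)%N -> (1 < b)%R ->
  (forall r, (r <= h)%N -> (0 <= p r)%R) ->
  (\big[Rplus/R0]_(r < h.+1) p r)%R = 1%R ->
  let C := (\big[Rplus/R0]_(r < h.+1)
              (p r * logb b (gauss #|F| T (subn h r) / gauss #|F| h (subn h r))))%R in
  (forall P : 'M[F]_T -> R, is_input_dist h P -> (mutinf h p b P <= C)%R) /\
  (exists P : 'M[F]_T -> R, is_input_dist h P /\ mutinf h p b P = C).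
Proof.
move=> h1 hT hb hp hs C.
have EC : C = (\big[Rplus/R0]_(r < h.+1) (p (h - r)%nat * logb b (gauss #|F| T r / gauss #|F| h r)))%R.
  rewrite /C -(rev_sum h (fun k => p k * logb b (gauss #|F| T (h - k)%nat / gauss #|F| h (h - k)%nat))%R).
  by apply: eq_bigr => r _; rewrite subKn // -ltnS.
rewrite EC; split.
  move=> P HP; exact: upper.
exists (@P0 F T h); split; first exact: P0_dist.
exact: mutinf_P0.
Qed.
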